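(* Let $S,B\subseteq\{-1,1,*\}^X$ be binary hypothesis classes. For any $\varepsilon,\delta\ge0$ and $n\in\mathbb{Z}_{\ge0}$, every learner that solves comparative learning $\mathsf{CompL}_n(S,B,\varepsilon,\delta)$ also solves realizable learning $\mathsf{ReaL}_n(\mathbf{A}_{S,B},\varepsilon,\delta)$; i.e. $\mathsf{CompL}_n(S,B,\varepsilon,\delta)\subseteq\mathsf{ReaL}_n(\mathbf{A}_{S,B},\varepsilon,\delta)$.
   Context: $X$ is a non-empty set; hypotheses are functions $X\to\{-1,1,*\}$; distributions are discrete. For $s,b:X\to\{-1,1,*\}$, the agreement hypothesis $\mathbf{a}_{s,b}$ is $\mathbf{a}_{s,b}(x)=-1$ if $s(x)=b(x)=-1$, $=1$ if $s(x)=b(x)=1$, and $=*$ otherwise; $\mathbf{A}_{S,B}=\{\mathbf{a}_{s,b}:s\in S,b\in B\}$. A learner takes $n$ data points in $X\times\{-1,1\}$ and outputs $f:X\to\{-1,1\}$ (possibly randomized). It belongs to $\mathsf{ReaL}_n(H,\varepsilon,\delta)$ if for every distribution $\mu$ on $X\times\{-1,1\}$ with $\Pr_\mu[h(x)=y]=1$ for some $h\in H$, given $n$ i.i.d. samples from $\mu$, with probability $\ge1-\delta$ it outputs $f$ with $\Pr_\mu[f(x)\neq y]\le\varepsilon$. It belongs to $\mathsf{CompL}_n(S,B,\varepsilon,\delta)$ if for every distribution $\mu$ with $\Pr_\mu[s(x)=y]=1$ for some $s\in S$, with probability $\ge1-\delta$ it outputs $f$ with $\Pr_\mu[f(x)\ne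 y]\le\inf_{b\in B}\Pr_\mu[b(x)\ne y]+\varepsilon$ ($b(x)=*$ counts as an error). *)

(* Defs.v *)
From mathcomp Require Import all_boot all_order all_algebra.
From mathcomp Require Import all_classical all_reals.
From mathcomp Require Import ereal esum.
Set Implicit Arguments. Unset Strict Implicit. Unset Printing Implicit Defensive.
Import Order.TTheory GRing.Theory Num.Theory.
Local Open Scope classical_set_scope.
Local Open Scope ring_scope.

(* Labels {-1,1} are encoded by bool (false = -1, true = 1).
   Partial hypothesis values {-1,1,*} are encoded by option bool
   (Some false = -1, Some true = 1, None = * ). *)
Definition phyp (X : Type) := X -> option bool.

(* A data point (x,y) in X x {-1,1}; {classic _} only equips it with a choice
   structure (needed for esum), it is convertible to X * bool. *)
Definition pt (X : Type) := {classic (X * bool)}.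

Definition is_distr (R : realType) (T : choiceType) (p : T -> R) : Prop :=
  (forall t, 0 <= p t) /\ (\esum_(t in [set: T]) (p t)%:E = 1%E).

Definition prob (R : realType) (T : choiceType) (p : T -> R) (E : set T) : \bar R :=
  \esum_(t in E) (p t)%:E.

Definition agree (X : Type) (s b : phyp X) : phyp X :=
  fun x => if s x == b x then s x else None.

Definition agreeClass (X : Type) (S B : set (phyp X)) : set (phyp X) :=
  [set a | exists s b, S s /\ B b /\ a = agree s b].

Definition err (R : realType) (X : Type) (mu : pt X -> R) (h : phyp X) : \bar R :=
  prob mu [set xy : pt X | h xy.1 <> Some xy.2].

Definition tot (X : Type) (f : X -> bool) : phyp X := fun x => Some (f x).

Definition realizable (R : realType) (X : Type) (H : set (phyp X)) (mu : pt X -> R) : Prop :=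
  exists2 h, H h & prob mu [set xy : pt X | h xy.1 = Some xy.2] = 1%E.

(* A (possibly randomized) learner on n data points: maps each sample to a
   discrete distribution over output hypotheses X -> {-1,1}. *)
Definition learnerT (R : realType) (X : Type) (n : nat) :=
  ('I_n -> pt X) -> (X -> bool) -> R.

Definition is_learner (R : realType) (X : Type) (n : nat) (L : learnerT R X n) : Prop :=
  forall s, is_distr (L s).

Definition sample_dens (R : realType) (X : Type) (n : nat) (mu : pt X -> R)
  (s : 'I_n -> pt X) : R := \prod_(i < n) mu (s i).

Definition succ_prob (R : realType) (X : Type) (n : nat) (mu : pt X -> R)
  (L : learnerT R X n) (good : (X -> bool) -> Prop) : \bar R :=
  \esum_(sf in [set sf : ('I_n -> pt X) * (X -> bool) | good sf.2])
     (sample_dens mu sf.1 * L sf.1 sf.2)%:E.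

Definition ReaL (R : realType) (X : Type) (n : nat) (H : set (phyp X))
  (eps delta : R) (L : learnerT R X n) : Prop :=
  forall mu : pt X -> R, is_distr mu -> realizable H mu ->
    ((1 - delta)%:E <= succ_prob mu L (fun f => err mu (tot f) <= eps%:E))%E.

Definition CompL (R : realType) (X : Type) (n : nat) (S B : set (phyp X))
  (eps delta : R) (L : learnerT R X n) : Prop :=
  forall mu : pt X -> R, is_distr mu -> realizable S mu ->
    ((1 - delta)%:E <= succ_prob mu L
       (fun f => err mu (tot f) <= ereal_inf [set err mu b | b in B] + eps%:E))%E.

(* Main.v *)
Require Import Defs.
From mathcomp Require Import all_boot all_order all_algebra.
From mathcomp Require Import all_classical all_reals.
From mathcomp Require Import ereal esum.
From mathcomp Require Import lra.
Import Order.TTheory GRing.Theory Num.Theory.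
Local Open Scope classical_set_scope.
Local Open Scope ring_scope.

Lemma esum_sub (R : realType) (T : choiceType) (a : T -> \bar R) (E F : set T) :
  E `<=` F -> (forall x, (0 <= a x)%E) ->
  (\esum_(i in E) a i <= \esum_(i in F) a i)%E.
Proof.
move=> EF a0; rewrite (esum_mkcond E) (esum_mkcond F); apply: le_esum => i _.
case: ifPn => [/set_mem/EF/mem_set -> //|_]; by case: ifP.
Qed.

Lemma prob_le1 (R : realType) (T : choiceType) (p : T -> R) E :
  is_distr p -> (prob p E <= 1)%E.
Proof.
move=> [p0 p1]; rewrite -p1; apply: esum_sub => // x; by rewrite lee_fin.
Qed.

Lemma prob1_sub (R : realType) (T : choiceType) (p : T -> R) E F :
  is_distr p -> E `<=` F -> prob p E = 1%E -> prob p F = 1%E.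
Proof.
move=> d EF pE; apply/eqP; rewrite eq_le prob_le1 //= -pE.
apply: esum_sub => // x; rewrite lee_fin; by case: d.
Qed.

Lemma prob1_compl (R : realType) (T : choiceType) (p : T -> R) E :
  is_distr p -> prob p E = 1%E -> prob p (~` E) = 0%E.
Proof.
move=> [p0 p1] pE.
have := esumID E [set: T] (fun t => (p t)%:E) (fun t _ => (introT idP (p0 t) : (0 <= (p t)%:E)%E)).
rewrite p1 !setTI -/(prob p E) -/(prob p (~` E)) pE.
have : (0 <= prob p (~` E))%E by apply: esum_ge0 => x _; rewrite lee_fin.
case: (prob p (~` E)) => [r||] //= r0.
move/eqP; rewrite -EFinD eqe => /eqP h; congr (_%:E); lra.
Qed.

Arguments esum_sub {R T a E F}.
Arguments prob_le1 {R T p E}.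
Arguments prob1_sub {R T p E F}.
Arguments prob1_compl {R T p E}.

Theorem lemma3p7 (R : realType) (X : Type) (x0 : X) (S B : set (phyp X))
  (eps delta : R) (n : nat) (L : learnerT R X n) :
  0 <= eps -> 0 <= delta -> is_learner L ->
  CompL S B eps delta L -> ReaL (agreeClass S B) eps delta L.
Proof.
move=> eps0 delta0 Ll HC mu dmu [a [s [b [Ss [Bb ->]]]] Ha].
have Hs : realizable S mu.
  exists s => //; apply: (prob1_sub dmu _ Ha) => xy /=.
  by rewrite /agree; case: eqP => // _ ->.
have Hb : err mu b = 0%E.
  apply/eqP; rewrite eq_le; apply/andP; split; last first.
    by apply: esum_ge0 => x _; rewrite lee_fin; case: dmu.
  rewrite -(prob1_compl dmu Ha); apply: esum_sub.
    move=> xy /= hb ha; apply: hb; move: ha; rewrite /agree.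
    by case: eqP => // <-.
  by move=> x; rewrite lee_fin; case: dmu.
have Hinf : (ereal_inf [set err mu b | b in B] <= 0)%E.
  have h : (ereal_inf [set err mu b | b in B] <= err mu b)%E.
    by apply: ereal_inf_lbound; exists b.
  by rewrite Hb in h.
have H1 := HC mu dmu Hs.
apply: (le_trans H1).
rewrite /succ_prob.
apply: (@esum_sub _ _ (fun sf : ('I_n -> pt X) * (X -> bool) => (sample_dens mu sf.1 * L sf.1 sf.2)%:E)).
  move=> sf /= h; apply: (le_trans h).
  by apply: le_trans (leeD Hinf (lexx _)) _; rewrite add0e.
move=> sf; rewrite lee_fin; apply: mulr_ge0; last by case: (Ll sf.1).
by apply: prodr_ge0 => i _; case: dmu.
Qed.
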